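(* Let $\alpha$ be a composition, $w\in CRHW_n$ with $w(\alpha)=\beta\neq0$, $\tau=\tau_w$, and let $j\ge1$ belong to $\mathrm{supp}(w)$ but not be its maximum. If $j\in\mathrm{leg}(w)$, then (i) the greatest entry of $\tau$ in column $j$ is strictly greater than the greatest entry of $\tau$ in column $j+1$, and (ii) every other entry of $\tau$ in column $j$ is strictly smaller than the smallest entry of $\tau$ in column $j+1$.
   Context: Box-adding operators on compositions $\alpha=(\alpha_1,\dots,\alpha_k)$: $\mathfrak t_1(\alpha)=(1,\alpha_1,\dots,\alpha_k)$ (a new row on top); for $i\ge2$, $\mathfrak t_i(\alpha)$ increases the leftmost part equal to $i-1$ by $1$ (adding a box in column $i$), and is $0$ if there is no such part; $\mathfrak t_i(0)=0$. Diagrams: row $i$ has $\alpha_i$ left-justified boxes, rows numbered top to bottom. A word $w=\mathfrak t_{i_1}\cdots\mathfrak t_{i_n}$ acts by $w(\alpha)=\mathfrak t_{i_1}(\cdots\mathfrak t_{i_n}(\alpha))$. It is a reverse $k$-hookword if $i_1\le\cdots\le i_{k+1}>i_{k+2}>\cdots>i_n$ ($0\le k\le n-1$), and then $\mathrm{leg}(w)=\{i_{k+1},\dots,i_n\}$. $\mathrm{supp}(w)=\{i_1,\dots,i_n\}$; $w$ is connected if $\mathrm{supp}(w)$ is a set of consecutive integers; $CRHW_n$ is the set of connected reverse hookwords of length $n$. If $w(\alpha)=\beta\ne0$, applying $\mathfrak t_{i_n},\dots,\mathfrak t_{i_1}$ successively adds one box at each step (the box added by $\mathfrak t_{i_m}$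 is in column $i_m$); $\tau_w$ is the filling of the set of added boxes in which the box added by $\mathfrak t_{i_m}$ has entry $m$. *)

(* Defs.v *)
From mathcomp Require Import all_boot.
Set Implicit Arguments. Unset Strict Implicit. Unset Printing Implicit Defensive.

(* Compositions: finite sequences of positive integers (row 1 first). *)
Definition is_composition (a : seq nat) : bool := all (fun x => 0 < x) a.

(* Box-adding operator t_i; [None] plays the role of 0.
   t_1 a = 1 :: a ; for i >= 2, increase the leftmost part equal to i-1. *)
Definition top (i : nat) (a : seq nat) : option (seq nat) :=
  if i == 0 then None
  else if i == 1 then Some (1 :: a)
  else let r := find (pred1 i.-1) a in
       if r < size a then Some (set_nth 0 a r i) else None.

(* w = t_{i_1} ... t_{i_n}, acting by w(a) = t_{i_1}( ... t_{i_n}(a)). *)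
Definition word_act (w : seq nat) (a : seq nat) : option (seq nat) :=
  foldr (fun i oa => obind (top i) oa) (Some a) w.

(* Boxes of a filling: ((row, column), entry), rows numbered 1,2,... top to
   bottom, columns 1,2,... left to right. *)
Definition box := (nat * nat * nat)%type.

Definition shift_entry (b : box) : box := (b.1, b.2.+1).
Definition shift_row (b : box) : box := ((b.1.1.+1, b.1.2), b.2).

(* [fill w a] simulates applying t_{i_n}, ..., t_{i_1} to a, recording the
   added boxes; the box added by t_{i_m} gets entry m (positions in w are
   1-indexed). *)
Fixpoint fill (w : seq nat) (a : seq nat) : option (seq nat * seq box) :=
  match w with
  | [::] => Some (a, [::])
  | i :: w' =>
      match fill w' a with
      | None => None
      | Some (b, bs) =>
          let bs' := map shift_entry bs in
          if i == 0 then None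
          else if i == 1 then Some (1 :: b, ((1, 1), 1) :: map shift_row bs')
          else let r := find (pred1 i.-1) b in
               if r < size b then Some (set_nth 0 b r i, ((r.+1, i), 1) :: bs')
               else None
      end
  end.

(* tau_w : the filling of the added boxes (empty if w(a) = 0). *)
Definition tau (w : seq nat) (a : seq nat) : seq box :=
  if fill w a is Some (_, T) then T else [::].

Definition col_entries (T : seq box) (j : nat) : seq nat :=
  [seq b.2 | b <- T & b.1.2 == j].

(* w is a reverse k-hookword: i_1 <= ... <= i_{k+1} > i_{k+2} > ... > i_n,
   with 0 <= k <= n-1. *)
Definition is_rhw (k : nat) (w : seq nat) : bool :=
  [&& k < size w, sorted leq (take k.+1 w) & sorted (fun x y => y < x) (drop k w)].

Definition in_leg (j : nat) (w : seq nat) : Prop :=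
  exists k, is_rhw k w /\ j \in drop k w.

Definition connected (w : seq nat) : Prop :=
  forall a b m, a \in w -> b \in w -> a <= m <= b -> m \in w.

(* CRHW_n : connected reverse hookwords of length n (letters are operator
   indices, hence >= 1). *)
Definition CRHW (n : nat) (w : seq nat) : Prop :=
  [/\ size w = n, all (fun i => 0 < i) w, connected w & exists k, is_rhw k w].

(* Main.v *)
Require Import Defs.
From mathcomp Require Import all_boot.

Lemma fill_word w a : omap fst (fill w a) = word_act w a.
Proof.
elim: w => [|i w IH] //=. rewrite -IH.
case: (fill w a) => [[b bs]|] //=.
rewrite /top. case: ifP => // _. case: ifP => // _. by case: ifP.
Qed.

Lemma col_shift_entry bs j :
  col_entries (map shift_entry bs) j = map S (col_entries bs j).
Proof.
elim: bs => //= b bs IH; rewrite /col_entries /= in IH *.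
by case: ifP => _ //=; rewrite IH.
Qed.

Lemma col_shift_row bs j :
  col_entries (map shift_row bs) j = col_entries bs j.
Proof.
elim: bs => //= b bs IH; rewrite /col_entries /= in IH *.
by case: ifP => _ //=; rewrite IH.
Qed.

Lemma col_cons c e bs j :
  col_entries ((c, e) :: bs) j = if c.2 == j then e :: col_entries bs j
                                  else col_entries bs j.
Proof. by rewrite /col_entries /=; case: ifP. Qed.

Lemma mem_step (i j e : nat) (w : seq nat) bs :
  (e \in col_entries bs j) = (0 < e <= size w) && (nth 0 w e.-1 == j) ->
  (e.+1 \in (if i == j then 1 :: map S (col_entries bs j)
                     else map S (col_entries bs j)))
  = (0 < e.+1 <= size (i :: w)) && (nth 0 (i :: w) e == j).
Proof.
move=> IH.
have H : (e.+1 \in map S (col_entries bs j)) = (e \in col_entries bs j).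
  by rewrite mem_map //; move=> x y [].
case: e IH H => [|e] IH H.
  by case: ifP => /= hij; rewrite ?inE H IH //= hij.
by case: ifP => /= hij; rewrite ?inE H IH.
Qed.

Lemma fill_col w a : forall b T j e, fill w a = Some (b, T) ->
  (e \in col_entries T j) = (0 < e <= size w) && (nth 0 w e.-1 == j).
Proof.
elim: w => [|i w IH] b T j e /=.
  by case=> _ <-; rewrite in_nil; case: e.
case E: (fill w a) => [[b' bs]|] //.
have IH' := IH _ _ j _ E.
case: ifP => // _.
have Hz : (0 \in map S (col_entries bs j)) = false.
  by apply/negP => /mapP [x _].
case: ifP => [/eqP hi1|_].
  case=> _ <-; rewrite col_cons /= col_shift_row col_shift_entry.
  case: e => [|e]; first by case: ifP => _ //; rewrite ?inE Hz.
  subst i; exact: (mem_step 1 _ _ _ _ (IH' e)).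
case: ifP => // _ [_ <-]; rewrite col_cons /= col_shift_entry.
case: e => [|e]; first by case: ifP => _ //; rewrite ?inE Hz.
exact: (mem_step i _ _ _ _ (IH' e)).
Qed.

Lemma bigmax_le (s : seq nat) x : (forall y, y \in s -> y <= x) -> \max_(y <- s) y <= x.
Proof.
elim: s => [|a s IH] H; rewrite ?big_nil ?big_cons //.
rewrite geq_max; apply/andP; split; first by apply: H; rewrite mem_head.
by apply: IH => y hy; apply: H; rewrite inE hy orbT.
Qed.

Lemma le_bigmax (s : seq nat) x : x \in s -> x <= \max_(y <- s) y.
Proof.
elim: s => // a s IH; rewrite inE big_cons => /orP [/eqP->|h].
  exact: leq_maxl.
exact: leq_trans (IH h) (leq_maxr _ _).
Qed.

Theorem mainTheorem9 (alpha beta : seq nat) (n : nat) (w : seq nat) (j : nat) :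
  is_composition alpha ->
  CRHW n w ->
  word_act w alpha = Some beta ->
  1 <= j -> j \in w -> j < \max_(i <- w) i ->
  in_leg j w ->
  let cj := col_entries (tau w alpha) j in
  let cj1 := col_entries (tau w alpha) j.+1 in
  \max_(e <- cj1) e < \max_(e <- cj) e /\
  (forall e, e \in cj -> e != \max_(x <- cj) x ->
     forall f, f \in cj1 -> e < f).
Proof.
move=> _ _ Hact _ _ _ [k [Hk Hjd]] cj cj1.
rewrite -fill_word in Hact.
case E: (fill w alpha) Hact => [[b T]|] // _.
have HT : tau w alpha = T by rewrite /tau E.
have Hm := fun j e => fill_col w alpha b T j e E.
move/and3P: Hk => [Hks Hinc Hdec].
case/(nthP 0): Hjd => i Hi Hni.
rewrite size_drop in Hi.
rewrite nth_drop in Hni.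
have Hp : k + i < size w by rewrite -ltn_subRL.
have trg : transitive (fun x y : nat => y < x).
  by move=> y x z h1 h2; exact: ltn_trans h2 h1.
have Hsd := sorted_ltn_nth trg 0 Hdec.
have Hsz : size (drop k w) = size w - k by rewrite size_drop.
have hni : nth 0 (drop k w) i = j by rewrite nth_drop.
have Hin : forall x, x < size w - k -> x \in [pred n | n < size (drop k w)].
  by move=> x hx; rewrite inE /= Hsz.
have Hpos : forall m, k <= m -> m < size w ->
    exists2 i', i' < size w - k & (m = k + i' /\ nth 0 (drop k w) i' = nth 0 w m).
  move=> m hkm hm; exists (m - k); first by rewrite ltn_subRL subnKC.
  by rewrite nth_drop subnKC.
have HA : forall m, m < size w -> nth 0 w m = j -> m != k + i -> m < k.
  move=> m hm hnm hne; rewrite ltnNge; apply/negP => hkm.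
  have [i' hi' [hm' hn']] := Hpos m hkm hm.
  case: (ltngtP i i') => h.
  - have := Hsd i i' (Hin _ Hi) (Hin _ hi') h.
    by rewrite hn' hnm hni ltnn.
  - have := Hsd i' i (Hin _ hi') (Hin _ Hi) h.
    by rewrite hn' hnm hni ltnn.
  - by rewrite hm' h eqxx in hne.
have HB : forall q, q < size w -> nth 0 w q = j.+1 -> q < k + i.
  move=> q hq hnq; case: (ltnP q k) => hkq; first exact: ltn_addr.
  have [i' hi' [hm' hn']] := Hpos q hkq hq.
  rewrite hm' ltn_add2l; case: (ltngtP i' i) => h //.
  - have := Hsd i i' (Hin _ Hi) (Hin _ hi') h.
    by rewrite hn' hnq hni ltnNge leqnSn.
  - by move: hn'; rewrite hnq h hni => /n_Sn.
have Hsi := sorted_leq_nth leq_trans leqnn 0 Hinc.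
have Hszt : size (take k.+1 w) = k.+1.
  rewrite size_take; case: ifP => // /negbT; rewrite -leqNgt => h; apply/eqP; by rewrite eqn_leq h Hks.
have HC : forall m q, m < k -> q < size w -> nth 0 w m = j -> nth 0 w q = j.+1 -> m < q.
  move=> m q hmk hq hnm hnq; case: (ltnP q k) => hqk; last exact: leq_trans hmk hqk.
  rewrite ltnNge; apply/negP => hqm.
  have := Hsi q m; rewrite !inE /= Hszt !nth_take ?ltnS ?(ltnW hmk) ?(ltnW hqk) //.
  by rewrite hnm hnq ltnn => /(_ isT isT hqm).
have Hcj : forall e, (e \in cj) = (0 < e <= size w) && (nth 0 w e.-1 == j).
  by move=> e; rewrite /cj HT Hm.
have Hcj1 : forall e, (e \in cj1) = (0 < e <= size w) && (nth 0 w e.-1 == j.+1).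
  by move=> e; rewrite /cj1 HT Hm.
have Hmax : \max_(x <- cj) x = (k + i).+1.
  apply/eqP; rewrite eqn_leq; apply/andP; split.
    apply: bigmax_le => y; rewrite Hcj; case: y => [|y] //= /andP [hy /eqP hny].
    rewrite ltnS leqNgt; apply/negP => hlt.
    have hne : y != k + i by rewrite gtn_eqF.
    have hyk := HA y hy hny hne.
    by have := ltn_trans hyk (leq_ltn_trans (leq_addr i k) hlt); rewrite ltnn.
  by apply: le_bigmax; rewrite Hcj /= Hp Hni eqxx.
rewrite Hmax; split.
  rewrite ltnS; apply: bigmax_le => y; rewrite Hcj1; case: y => [|y] //= /andP [hy /eqP hny].
  exact: HB.
move=> e; rewrite Hcj; case: e => [|m] //= /andP [hm /eqP hnm] hne f.
rewrite Hcj1; case: f => [|q] //= /andP [hq /eqP hnq].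
rewrite ltnS; apply: (HC m q _ hq hnm hnq); apply: HA hm hnm _.
by rewrite -eqSS.
Qed.
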